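(* Let $G$ be a connected graph, and let $P$ be an ear of $G$ containing at least five vertices. Let $H$ be the subgraph of $G$ induced by removing the internal vertices of $P$. If $\overline{H}$ has an orthogonal vector representation in $\mathbb{R}^3$ consisting of pairwise linearly independent vectors, then so does $\overline{G}$.
   Context: All graphs are finite and simple; $\overline{G}$ denotes the complement of $G$. An ear of a graph $G$ is a maximal path subgraph of $G$ whose internal vertices each have degree 2 in $G$. An orthogonal vector representation of a graph $G=(V,E)$ in $\mathbb{R}^d$ is a map $\phi:V\to\mathbb{R}^d$ with $\phi(v)\neq 0$ for all $v$, and for distinct $u,v$: $\langle\phi(u),\phi(v)\rangle=0$ if and only if $uv\notin E$. *)

(* Defs.v *)
From HB Require Import structures.
From mathcomp Require Import all_boot all_order all_algebra.
From mathcomp Require Import reals.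
Set Implicit Arguments. Unset Strict Implicit. Unset Printing Implicit Defensive.
Import Order.TTheory GRing.Theory Num.Theory.
Local Open Scope ring_scope.

(* A finite simple graph is a symmetric irreflexive relation e on a finType T. *)

Definition compl_graph (T : finType) (e : rel T) : rel T :=
  fun x y => (x != y) && ~~ e x y.

Definition connected_graph (T : finType) (e : rel T) : Prop :=
  forall x y : T, connect e x y.

Definition deg (T : finType) (e : rel T) (x : T) : nat := #|[set y | e x y]|.

Definition gpath (T : finType) (e : rel T) (p : seq T) : bool :=
  uniq p && (if p is x :: s then path e x s else true).

Definition internal (T : eqType) (p : seq T) : seq T := drop 1 (take (size p).-1 p).

Definition path_edge (T : eqType) (q : seq T) (x y : T) : bool :=
  has (fun ab : T * T => ((ab.1 == x) && (ab.2 == y)) || ((ab.1 == y) && (ab.2 == x)))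
      (zip q (behead q)).

Definition path_subgraph (T : eqType) (p q : seq T) : bool :=
  all (fun x => x \in q) p &&
  all (fun xy : T * T => path_edge q xy.1 xy.2) (zip p (behead p)).

Definition deg2_path (T : finType) (e : rel T) (p : seq T) : bool :=
  gpath e p && all (fun v => deg e v == 2)%N (internal p).

Definition is_ear (T : finType) (e : rel T) (p : seq T) : Prop :=
  [/\ p != [::], deg2_path e p &
      forall q : seq T, deg2_path e q -> path_subgraph p q -> (size q <= size p)%N].

Definition induced_rel (T : finType) (e : rel T) (P : pred T) : rel {x : T | P x} :=
  fun x y => e (val x) (val y).
Arguments induced_rel {T} e P.

Definition dotv (R : realType) (u v : 'rV[R]_3) : R := (u *m v^T) 0 0.

Definition ortho_rep (R : realType) (V : finType) (f : rel V) (phi : V -> 'rV[R]_3) : Prop :=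
  (forall v, phi v != 0) /\
  (forall u v, u != v -> (dotv (phi u) (phi v) == 0) = ~~ f u v).

Definition pairwise_indep (R : realType) (V : finType) (phi : V -> 'rV[R]_3) : Prop :=
  forall u v, u != v -> row_free (col_mx (phi u) (phi v)).

(* Main.v *)
Require Import Defs.
From HB Require Import structures.
From mathcomp Require Import all_boot all_order all_algebra.
From mathcomp Require Import reals.
From mathcomp Require Import ring lra zify.
Set Implicit Arguments. Unset Strict Implicit. Unset Printing Implicit Defensive.
Import Order.TTheory GRing.Theory Num.Theory.
Local Open Scope ring_scope.

Definition c0 : 'I_3 := @Ordinal 3 0 isT.
Definition c1 : 'I_3 := @Ordinal 3 1 isT.
Definition c2 : 'I_3 := @Ordinal 3 2 isT.

Lemma dotvE (R : realType) (u v : 'rV[R]_3) :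
  dotv u v = u 0 c0 * v 0 c0 + u 0 c1 * v 0 c1 + u 0 c2 * v 0 c2.
Proof.
rewrite /dotv !mxE !big_ord_recr big_ord0 /= !mxE add0r.
have -> : (ord_max : 'I_3) = c2 by apply/val_inj.
have -> : (widen_ord (leqnSn 2) ord_max : 'I_3) = c1 by apply/val_inj.
have -> : (widen_ord (leqnSn 2) (widen_ord (leqnSn 1) ord_max) : 'I_3) = c0 by apply/val_inj.
by [].
Qed.

Lemma vecP (R : realType) (u v : 'rV[R]_3) :
  u 0 c0 = v 0 c0 -> u 0 c1 = v 0 c1 -> u 0 c2 = v 0 c2 -> u = v.
Proof.
move=> h0 h1 h2; apply/rowP => i.
have [->|] := eqVneq i c0; first by [].
have [->|] := eqVneq i c1; first by [].
have [->|] := eqVneq i c2; first by [].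
case: i => [[|[|[|k]]] Hi] H1 H2 H3.
- by case/eqP: H1; apply/val_inj.
- by case/eqP: H2; apply/val_inj.
- by case/eqP: H3; apply/val_inj.
- by [].
Qed.

Fact cross_key : unit. Proof. exact: tt. Qed.
Definition cross (R : realType) : 'rV[R]_3 -> 'rV[R]_3 -> 'rV[R]_3 := locked_with cross_key (fun u v =>
  \row_(i < 3) (if i == c0 then u 0 c1 * v 0 c2 - u 0 c2 * v 0 c1
                else if i == c1 then u 0 c2 * v 0 c0 - u 0 c0 * v 0 c2
                else u 0 c0 * v 0 c1 - u 0 c1 * v 0 c0)).

Lemma crossE0 (R : realType) (u v : 'rV[R]_3) : cross u v 0 c0 = u 0 c1 * v 0 c2 - u 0 c2 * v 0 c1.
Proof. by rewrite /cross unlock mxE. Qed.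
Lemma crossE1 (R : realType) (u v : 'rV[R]_3) : cross u v 0 c1 = u 0 c2 * v 0 c0 - u 0 c0 * v 0 c2.
Proof. by rewrite /cross unlock mxE. Qed.
Lemma crossE2 (R : realType) (u v : 'rV[R]_3) : cross u v 0 c2 = u 0 c0 * v 0 c1 - u 0 c1 * v 0 c0.
Proof. by rewrite /cross unlock mxE. Qed.

Ltac vsimp := rewrite ?dotvE; do 4 rewrite ?crossE0 ?crossE1 ?crossE2 ?mxE.

Lemma dotvC (R : realType) (u v : 'rV[R]_3) : dotv u v = dotv v u.
Proof. vsimp; ring. Qed.

Lemma crossC (R : realType) (u v : 'rV[R]_3) : cross u v = - cross v u.
Proof. apply: vecP; rewrite !mxE; vsimp; ring. Qed.

Lemma crossC_neq0 (R : realType) (u v : 'rV[R]_3) : (cross u v != 0) = (cross v u != 0).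
Proof. by rewrite crossC oppr_eq0. Qed.

Lemma dotv0 (R : realType) (u : 'rV[R]_3) : dotv u 0 = 0.
Proof. vsimp; rewrite ?mxE; ring. Qed.

Lemma cross0v (R : realType) (u : 'rV[R]_3) : cross 0 u = 0.
Proof. apply: vecP; vsimp; rewrite ?mxE; ring. Qed.

Lemma dotvv_eq0 (R : realType) (u : 'rV[R]_3) : (dotv u u == 0) = (u == 0).
Proof.
apply/eqP/eqP; last by move=> ->; rewrite dotv0.
rewrite dotvE => H.
have h0 : u 0 c0 = 0 by nra.
have h1 : u 0 c1 = 0 by nra.
have h2 : u 0 c2 = 0 by nra.
by apply: vecP; rewrite mxE.
Qed.

Lemma triple (R : realType) (a b c : 'rV[R]_3) : dotv (cross a b) c = dotv b (cross c a).
Proof. vsimp; ring. Qed.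

Lemma cross_dotl (R : realType) (a b : 'rV[R]_3) : dotv (cross a b) a = 0.
Proof. vsimp; ring. Qed.
Lemma cross_dotr (R : realType) (a b : 'rV[R]_3) : dotv (cross a b) b = 0.
Proof. vsimp; ring. Qed.

Lemma lagrange (R : realType) (u v : 'rV[R]_3) :
  dotv (cross u v) (cross u v) + dotv u v ^+ 2 = dotv u u * dotv v v.
Proof. vsimp; ring. Qed.

Lemma orth_cross_neq0 (R : realType) (u v : 'rV[R]_3) :
  u != 0 -> v != 0 -> dotv u v = 0 -> cross u v != 0.
Proof.
move=> hu hv huv; apply/eqP => hc.
have := lagrange u v; rewrite hc dotv0 huv expr2 mul0r addr0 => /esym/eqP.
by rewrite mulf_eq0 !dotvv_eq0 (negbTE hu) (negbTE hv).
Qed.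

Lemma id_par (R : realType) (u w z : 'rV[R]_3) :
  dotv (cross u (cross w u)) z = dotv w z * dotv u u - dotv u z * dotv u w.
Proof. vsimp; ring. Qed.

Lemma par_orth (R : realType) (u w z : 'rV[R]_3) :
  cross w u = 0 -> u != 0 -> dotv u z = 0 -> dotv w z = 0.
Proof.
move=> hc hu hz; have := id_par u w z; rewrite hc.
have -> : cross u 0 = 0 by rewrite crossC cross0v oppr0.
rewrite dotvC dotv0 hz mul0r subr0 => /esym/eqP.
by rewrite mulf_eq0 dotvv_eq0 (negbTE hu) orbF => /eqP.
Qed.

Lemma id_cc (R : realType) (n y w z : 'rV[R]_3) :
  dotv (cross (cross n y) w) z = dotv y z * dotv n w - dotv n z * dotv y w.
Proof. vsimp; ring. Qed.

Lemma id_ccc (R : realType) (B w n : 'rV[R]_3) :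
  cross (cross (cross B w) n) B = dotv B n *: cross w B.
Proof. apply: vecP; rewrite ?mxE; vsimp; rewrite ?mxE; vsimp; ring. Qed.

Lemma id_x2 (R : realType) (n y B w : 'rV[R]_3) :
  dotv (cross (cross n y) B) w = dotv y (cross (cross B w) n).
Proof. vsimp; ring. Qed.

Lemma cross_lin_l (R : realType) (a b : R) (u v : 'rV[R]_3) :
  cross (a *: u + b *: v) v = a *: cross u v.
Proof. apply: vecP; rewrite ?mxE; vsimp; rewrite ?mxE; vsimp; ring. Qed.
Lemma cross_lin_r (R : realType) (a b : R) (u v : 'rV[R]_3) :
  cross u (a *: u + b *: v) = b *: cross u v.
Proof. apply: vecP; rewrite ?mxE; vsimp; rewrite ?mxE; vsimp; ring. Qed.
Lemma id_dep (R : realType) (u v : 'rV[R]_3) :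
  (- dotv u v) *: u + dotv u u *: v = cross u (cross v u).
Proof. apply: vecP; rewrite ?mxE; vsimp; rewrite ?mxE; vsimp; ring. Qed.

Lemma rowfree_cross (R : realType) (u v : 'rV[R]_3) :
  row_free (col_mx u v) -> cross u v != 0.
Proof.
move=> hf; apply/eqP => hc.
have hcv : cross v u = 0 by rewrite crossC hc oppr0.
have [u0|un0] := eqVneq u 0.
  have := mulmx_free_eq0 (row_mx (1%:M : 'M[R]_1) (0 : 'M[R]_1)) hf.
  rewrite mul_row_col mul1mx mul0mx addr0 u0 eqxx row_mx_eq0 eqxx andbT.
  by move/esym/eqP/matrixP => /(_ 0 0); rewrite !mxE /= => /eqP; rewrite oner_eq0.
have := mulmx_free_eq0 (row_mx ((- dotv u v)%:M : 'M[R]_1) ((dotv u u)%:M : 'M[R]_1)) hf.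
rewrite mul_row_col !mul_scalar_mx id_dep hcv.
have -> : cross u 0 = 0 by rewrite crossC cross0v oppr0.
rewrite eqxx row_mx_eq0 => /esym/andP [_ /eqP/matrixP /(_ 0 0)].
rewrite !mxE /= mulr1n => /eqP; rewrite dotvv_eq0; exact/negP.
Qed.

Lemma cross_rowfree (R : realType) (u v : 'rV[R]_3) :
  cross u v != 0 -> row_free (col_mx u v).
Proof.
move=> hc; apply/negPn/negP => hnf.
have : kermx (col_mx u v) != 0 by rewrite kermx_eq0.
case/rowV0Pn => z /sub_kermxP hz zn0.
rewrite -(hsubmxK z) mul_row_col (mx11_scalar (lsubmx z)) (mx11_scalar (rsubmx z)) !mul_scalar_mx in hz.
move: zn0; rewrite -(hsubmxK z) (mx11_scalar (lsubmx z)) (mx11_scalar (rsubmx z)).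
set a := lsubmx z 0 0 in hz *; set b := rsubmx z 0 0 in hz *.
have [a0|an0] := eqVneq a 0.
  rewrite a0 scale0r add0r in hz.
  have := cross_lin_r 0 b u v; rewrite scale0r add0r hz.
  have -> : cross u 0 = 0 by rewrite crossC cross0v oppr0.
  move/esym/eqP; rewrite scaler_eq0 (negbTE hc) orbF => /eqP b0.
  by rewrite a0 b0 row_mx_eq0 raddf0 eqxx.
have := cross_lin_l a b u v; rewrite hz cross0v => /esym/eqP.
by rewrite scaler_eq0 (negbTE hc) (negbTE an0).
Qed.

Lemma exists_nonroot (R : realType) (P : {poly R}) : P != 0 -> exists t, ~~ root P t.
Proof.
move=> hP.
set rs := [seq (i%:R : R) | i <- iota 0 (size P)].
have hu : uniq rs.
  rewrite map_inj_uniq ?iota_uniq // => i j /eqP; rewrite eqr_nat => /eqP.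
  by [].
have [hall|] := boolP (all (root P) rs).
  have := max_poly_roots hP hall hu; by rewrite size_map size_iota ltnn.
by rewrite -has_predC => /hasP [t _ ht]; exists t.
Qed.

Definition yv (R : realType) (t : R) : 'rV[R]_3 := \row_(i < 3) t ^+ i.

Definition pz (R : realType) (z : 'rV[R]_3) : {poly R} :=
  (z 0 c0)%:P + (z 0 c1)%:P * 'X + (z 0 c2)%:P * 'X^2.

Lemma pz_horner (R : realType) (z : 'rV[R]_3) t : (pz z).[t] = dotv (yv t) z.
Proof. rewrite /pz dotvE !mxE !hornerE /= expr1 expr2; ring. Qed.

Lemma pz_neq0 (R : realType) (z : 'rV[R]_3) : z != 0 -> pz z != 0.
Proof.
move=> hz; apply/eqP => h; move/eqP: hz; apply.
have h0 : (pz z)`_0 = 0 by rewrite h coef0.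
have h1 : (pz z)`_1 = 0 by rewrite h coef0.
have h2 : (pz z)`_2 = 0 by rewrite h coef0.
rewrite /pz !coefE /= in h0 h1 h2.
apply: vecP; rewrite mxE; move: h0 h1 h2; rewrite ?mulr0 ?mulr1 ?addr0 ?add0r; lra.
Qed.

Lemma gen_avoid (R : realType) (zs : seq 'rV[R]_3) :
  all (fun z => z != 0) zs -> exists y, forall z, z \in zs -> dotv y z != 0.
Proof.
move=> hz.
have hP : \prod_(z <- zs) pz z != 0.
  rewrite prodf_seq_neq0; apply/allP => z hzs /=; apply: pz_neq0; exact: (allP hz).
have [t ht] := exists_nonroot hP.
exists (yv t) => z hzs.
move: ht; rewrite /root horner_prod prodf_seq_neq0 => /allP /(_ z hzs) /=.
by rewrite pz_horner.
Qed.

Lemma cross_neq0_l (R : realType) (u v : 'rV[R]_3) : cross u v != 0 -> u != 0.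
Proof. by apply: contraNneq => ->; rewrite cross0v. Qed.

Lemma dotv_neq0_l (R : realType) (u v : 'rV[R]_3) : dotv u v != 0 -> u != 0.
Proof. by apply: contraNneq => ->; rewrite dotvC dotv0. Qed.

Lemma step_lemma (R : realType) (n : 'rV[R]_3) (ws zs : seq 'rV[R]_3) :
  n != 0 -> (forall w, w \in ws -> cross w n != 0) -> (forall z, z \in zs -> z != 0) ->
  exists y, (forall w, w \in ws -> dotv (cross n y) w != 0 /\ cross (cross n y) w != 0) /\
            (forall z, z \in zs -> dotv y z != 0).
Proof.
move=> hn hws hzs.
have [y hy] : exists y, forall z, z \in zs ++ [seq cross w n | w <- ws] ++ ws -> dotv y z != 0.
  apply: gen_avoid; apply/allP => z; rewrite !mem_cat => /or3P [h|/mapP [w hw ->]|h].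
  - exact: hzs.
  - exact: hws.
  - exact: (cross_neq0_l (hws _ h)).
exists y; split; last first.
  by move=> z hz; apply: hy; rewrite mem_cat hz.

move=> w hw.
have hx : dotv (cross n y) w != 0.
  by rewrite triple; apply: hy; rewrite !mem_cat; apply/or3P; apply: Or32; apply/mapP; exists w.
split=> //; apply/eqP => hc.
have hwn : dotv w n = 0.
  apply: (par_orth (u := cross n y)); first by rewrite crossC hc oppr0.
    exact: dotv_neq0_l hx.
  exact: cross_dotl.
have := id_cc n y w n; rewrite hc dotvC dotv0 (dotvC n w) hwn mulr0 sub0r => /esym/eqP.
rewrite oppr_eq0 mulf_eq0 dotvv_eq0 (negbTE hn) /= => /eqP hyw.
have : dotv y w != 0 by apply: hy; rewrite !mem_cat hw !orbT.
by rewrite hyw eqxx.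
Qed.

Lemma cross_eq0C (R : realType) (u v : 'rV[R]_3) : cross u v = 0 -> cross v u = 0.
Proof. by move=> h; rewrite crossC h oppr0. Qed.

Lemma par_contra (R : realType) (u w z : 'rV[R]_3) :
  u != 0 -> dotv u z = 0 -> dotv w z != 0 -> cross u w != 0.
Proof.
move=> hu huz hwz; apply/eqP => hc; move/eqP: hwz; apply.
exact: (par_orth (cross_eq0C hc) hu huz).
Qed.

Lemma double_step (R : realType) (n B : 'rV[R]_3) (ws : seq 'rV[R]_3) :
  n != 0 -> B != 0 -> dotv n B != 0 -> cross n B != 0 ->
  (forall w, w \in ws -> cross w n != 0 /\ cross w B != 0) ->
  exists x1 x2,
  (dotv x1 n = 0 /\ dotv x1 B != 0 /\ cross x1 n != 0 /\ cross x1 B != 0 /\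
      forall w, w \in ws -> dotv x1 w != 0 /\ cross x1 w != 0) /\
  (dotv x2 x1 = 0 /\ dotv x2 B = 0 /\ dotv x2 n != 0 /\ cross x2 x1 != 0 /\
      cross x2 B != 0 /\ cross x2 n != 0 /\
      forall w, w \in ws -> dotv x2 w != 0 /\ cross x2 w != 0).
Proof.
move=> hn hB hnB hcnB hws.
have pre1 : forall w, w \in B :: ws -> cross w n != 0.
  move=> w; rewrite in_cons => /orP [/eqP ->|hw]; first by rewrite crossC oppr_eq0.
  exact: (hws w hw).1.
have pre2 : forall z, z \in [seq cross (cross B w) n | w <- n :: ws] -> z != 0.
  move=> z /mapP [w hw ->]; apply/eqP => h.
  have := id_ccc B w n; rewrite h cross0v => /esym/eqP; rewrite scaler_eq0.
  rewrite dotvC (negbTE hnB) /=.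
  move: hw; rewrite in_cons => /orP [/eqP ->|hw]; first by rewrite (negbTE hcnB).
  by rewrite (negbTE (hws w hw).2).
have [y [hy1 hy2]] := step_lemma hn pre1 pre2.
set x1 := cross n y.
  have hx1B := hy1 B (mem_head _ _).
  have hx1n0 : x1 != 0 by exact: dotv_neq0_l hx1B.1.
  have hx1n : dotv x1 n = 0 by exact: cross_dotl.
  have hx1ws : forall w, w \in ws -> dotv x1 w != 0 /\ cross x1 w != 0.
    by move=> w hw; apply: hy1; rewrite in_cons hw orbT.
  set x2 := cross x1 B.
  have hx2w : forall w, w \in n :: ws -> dotv x2 w != 0.
    move=> w hw; rewrite /x2 /x1 id_x2; apply: hy2; apply/mapP; by exists w.
  have hx2n0 : x2 != 0 by exact: dotv_neq0_l (hx2w n (mem_head _ _)).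
  have hx2x1 : dotv x2 x1 = 0 by exact: cross_dotl.
  have hx2B : dotv x2 B = 0 by exact: cross_dotr.
  exists x1, x2; do !split => //.
  + exact: hx1B.1.
  + exact: orth_cross_neq0.
  + exact: hx2w (mem_head _ _).
  + exact: orth_cross_neq0.
  + exact: orth_cross_neq0.
  + exact: (par_contra hx2n0 hx2B hnB).
  + by apply: hx2w; rewrite in_cons H orbT.
  + by apply: (par_contra hx2n0 hx2x1); rewrite dotvC; exact: (hx1ws w H).1.
Qed.

Definition pairgood (R : realType) (T : finType) (e : rel T) (phi : T -> 'rV[R]_3) (u v : T) :=
  cross (phi u) (phi v) != 0 /\ (dotv (phi u) (phi v) == 0) = e u v.

Definition goodp (R : realType) (T : finType) (e : rel T) (phi : T -> 'rV[R]_3) (act : pred T) :=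
  (forall u, act u -> phi u != 0) /\
  (forall u v, act u -> act v -> u != v -> pairgood e phi u v).

Lemma pairgood_sym (R : realType) (T : finType) (e : rel T) (phi : T -> 'rV[R]_3) u v :
  symmetric e -> pairgood e phi u v -> pairgood e phi v u.
Proof. by move=> es [h1 h2]; split; [rewrite crossC_neq0 | rewrite dotvC h2 es]. Qed.


Lemma ext1 (R : realType) (T : finType) (e : rel T) (es : symmetric e)
  (act act' : pred T) (phi : T -> 'rV[R]_3) (v m w0 : T) :
  goodp e phi act -> ~~ act v -> act m -> act w0 -> w0 != m ->
  (forall u, act u -> e v u = (u == m)) ->
  (forall u, act' u = act u || (u == v)) -> exists phi' : T -> 'rV[R]_3, goodp e phi' act'.
Proof.
move=> [hnz hpg] hv hm hw0 hw0m hev hact'.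
set ws := [seq phi u | u <- [seq u <- enum T | act u && (u != m)]].
have pre1 : forall w, w \in ws -> cross w (phi m) != 0.
  move=> w /mapP [u]; rewrite mem_filter => /andP [/andP [hu hum] _] ->.
  exact: (hpg u m hu hm hum).1.
have pre2 : forall z, z \in [::] -> z != 0 :> 'rV[R]_3 by [].
have [y [hy _]] := step_lemma (hnz m hm) pre1 pre2.
set x := cross (phi m) y.
have inws : forall u, act u -> u != m -> phi u \in ws.
  by move=> u hu hum; apply: map_f; rewrite mem_filter hu hum mem_enum.
have hx0 : x != 0 by exact: dotv_neq0_l (hy _ (inws _ hw0 hw0m)).1.
have H : forall u, act u -> cross x (phi u) != 0 /\ (dotv x (phi u) == 0) = e v u.
  move=> u hu; rewrite hev //; have [->|hum] := eqVneq u m.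
    split; last by rewrite /x cross_dotl eqxx.
    by apply: orth_cross_neq0 => //; [exact: hnz | exact: cross_dotl].
  by have [h1 h2] := hy _ (inws _ hu hum); split=> //; rewrite (negbTE h1).
exists (fun u => if u == v then x else phi u); split.
  move=> u; rewrite hact'; case: eqP => [_|_] /=; first by [].
  by rewrite orbF; exact: hnz.
move=> u u2; rewrite !hact' => hu hu2 huu2.
case: (eqVneq u v) hu huu2 => [->|huv] /= hu huu2; case: (eqVneq u2 v) hu2 huu2 => [->|hu2v] /= hu2 huu2.
- by [].
- by rewrite orbF in hu2; rewrite /pairgood eqxx (negbTE hu2v); exact: H.
- rewrite orbF in hu; apply: pairgood_sym => //.
  by rewrite /pairgood eqxx (negbTE huv); exact: H.
- rewrite orbF in hu hu2; rewrite /pairgood (negbTE huv) (negbTE hu2v).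
  by rewrite orbF in hu2; exact: hpg.
Qed.

Lemma ext2 (R : realType) (T : finType) (e : rel T) (es : symmetric e)
  (act act' : pred T) (phi : T -> 'rV[R]_3) (v1 v2 m bb : T) :
  goodp e phi act -> ~~ act v1 -> ~~ act v2 -> v1 != v2 -> act m -> act bb -> m != bb ->
  ~~ e m bb -> e v1 v2 ->
  (forall u, act u -> e v1 u = (u == m)) ->
  (forall u, act u -> e v2 u = (u == bb)) ->
  (forall u, act' u = [|| act u, u == v1 | u == v2]) ->
  exists phi' : T -> 'rV[R]_3, goodp e phi' act'.
Proof.
move=> [hnz hpg] hv1 hv2 hv12 hm hbb hmbb hemb he12 hev1 hev2 hact'.
set ws := [seq phi u | u <- [seq u <- enum T | [&& act u, u != m & u != bb]]].
have inws : forall u, act u -> u != m -> u != bb -> phi u \in ws.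
  by move=> u hu hum hub; apply: map_f; rewrite mem_filter hu hum hub mem_enum.
have pre : forall w, w \in ws -> cross w (phi m) != 0 /\ cross w (phi bb) != 0.
  move=> w /mapP [u]; rewrite mem_filter => /andP [/and3P [hu hum hub] _] ->.
  by split; [exact: (hpg u m hu hm hum).1 | exact: (hpg u bb hu hbb hub).1].
have [hc hd] := hpg m bb hm hbb hmbb.
have hd' : dotv (phi m) (phi bb) != 0 by rewrite hd.
have [x1 [x2 [[h11 [h12 [h13 [h14 h15]]]] [h21 [h22 [h23 [h24 [h25 [h26 h27]]]]]]]]] :=
  double_step (hnz m hm) (hnz bb hbb) hd' hc pre.
have hbm : bb != m by rewrite eq_sym.
have H1 : forall u, act u -> cross x1 (phi u) != 0 /\ (dotv x1 (phi u) == 0) = e v1 u.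
  move=> u hu; rewrite hev1 //; have [->|hum] := eqVneq u m; first by rewrite h11 eqxx.
  have [->|hub] := eqVneq u bb; first by rewrite (negbTE h12) ?(negbTE hbm).
  by have [q1 q2] := h15 _ (inws _ hu hum hub); rewrite (negbTE q1).
have H2 : forall u, act u -> cross x2 (phi u) != 0 /\ (dotv x2 (phi u) == 0) = e v2 u.
  move=> u hu; rewrite hev2 //; have [->|hum] := eqVneq u m.
    by rewrite (negbTE h23) (negbTE hmbb).
  have [->|hub] := eqVneq u bb; first by rewrite h22 eqxx.
  by have [q1 q2] := h27 _ (inws _ hu hum hub); rewrite (negbTE q1).
have na1 : forall u, act u -> (u == v1) = false.
  by move=> u hu; apply/eqP => hh; move: hv1; rewrite -hh hu.
have na2 : forall u, act u -> (u == v2) = false.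
  by move=> u hu; apply/eqP => hh; move: hv2; rewrite -hh hu.
have hv21 : (v2 == v1) = false by rewrite eq_sym (negbTE hv12).
have H12 : pairgood e (fun u => if u == v1 then x1 else if u == v2 then x2 else phi u) v1 v2.
  by rewrite /pairgood eqxx hv21 eqxx crossC_neq0 dotvC h21 eqxx he12.
exists (fun u => if u == v1 then x1 else if u == v2 then x2 else phi u); split.
  move=> u; rewrite hact'; case: eqP => [_ _|_] /=; first by exact: dotv_neq0_l h12.
  case: eqP => [_ _|_] /=; first by exact: dotv_neq0_l h23.
  by rewrite !orbF; exact: hnz.
move=> u u2; rewrite !hact' => /or3P [hu|/eqP ->|/eqP ->] /or3P [hu2|/eqP ->|/eqP ->] huu2.
- by rewrite /pairgood (na1 _ hu) (na2 _ hu) (na1 _ hu2) (na2 _ hu2); exact: hpg.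
- apply: pairgood_sym => //; rewrite /pairgood eqxx (na1 _ hu) (na2 _ hu); exact: H1.
- apply: pairgood_sym => //; rewrite /pairgood eqxx hv21 (na1 _ hu) (na2 _ hu); exact: H2.
- rewrite /pairgood eqxx (na1 _ hu2) (na2 _ hu2); exact: H1.
- by rewrite eqxx in huu2.
- exact: H12.
- rewrite /pairgood eqxx hv21 (na1 _ hu2) (na2 _ hu2); exact: H2.
- exact: pairgood_sym.
- by rewrite eqxx in huu2.
Qed.

Local Close Scope ring_scope.

Lemma L_int (T : eqType) (p : seq T) (x0 v : T) : uniq p ->
  (v \in internal p) = (0 < index v p < (size p).-1).
Proof.
move=> hu; apply/idP/idP.
  case/(nthP x0) => i; rewrite /internal size_drop size_take => hi.
  have hN : (size p).-1 < size p by case: (size p) hi => //= n; rewrite ltnSn.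
  rewrite hN in hi.
  rewrite nth_drop nth_take; last by lia.
  move=> <-; rewrite index_uniq //; lia.
move=> /andP [h1 h2].
have hvp : v \in p by rewrite -index_mem; lia.
have hN : (size p).-1 < size p by case: (size p) h2.
rewrite -(nth_index x0 hvp).
have -> : nth x0 p (index v p) = nth x0 (internal p) (index v p).-1.
  rewrite /internal nth_drop nth_take; last by lia.
  by congr nth; lia.
apply: mem_nth; rewrite /internal size_drop size_take hN; lia.
Qed.

Lemma L_path (T : finType) (e : rel T) (p : seq T) (x0 : T) j :
  gpath e p -> j.+1 < size p -> e (nth x0 p j) (nth x0 p j.+1).
Proof.
case: p => [|x s] //= /andP [_ hp] hj.
by move/(pathP x0): hp => /(_ j hj).
Qed.

Lemma L_nbr (T : finType) (e : rel T) (es : symmetric e) (p : seq T) (x0 : T) j u :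
  deg2_path e p -> 0 < j < (size p).-1 ->
  e (nth x0 p j) u = (u == nth x0 p j.-1) || (u == nth x0 p j.+1).
Proof.
move=> /andP [hg hdeg] /andP [hj1 hj2].
have hu : uniq p by case/andP: hg.
have hN : j.+1 < size p by lia.
have h1 : e (nth x0 p j) (nth x0 p j.-1).
  rewrite es; have := L_path x0 (j := j.-1) hg; rewrite prednK //; apply; lia.
have h2 : e (nth x0 p j) (nth x0 p j.+1) by exact: L_path.
have hne : nth x0 p j.-1 != nth x0 p j.+1.
  rewrite nth_uniq //; last by apply: (leq_ltn_trans (leq_pred j)); apply: ltnW.
  by rewrite ltn_eqF // (leq_ltn_trans (leq_pred j) (ltnSn j)).
have hNj : j < size p by exact: ltnW hN.
have hint : nth x0 p j \in internal p by rewrite (L_int x0) // index_uniq // hj1.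
have hd : deg e (nth x0 p j) = 2 by apply/eqP; exact: (allP hdeg).
have hS : [set nth x0 p j.-1; nth x0 p j.+1] == [set y | e (nth x0 p j) y].
  rewrite eqEcard; apply/andP; split.
    by apply/subsetP => y; rewrite !inE => /orP [] /eqP ->.
  by rewrite -/(deg e _) hd cards2 hne.
by rewrite -in_set2 (eqP hS) inE.
Qed.

Local Open Scope ring_scope.

Lemma goodp_ext (R : realType) (T : finType) (e : rel T) (phi : T -> 'rV[R]_3) (act act' : pred T) :
  (forall u, act' u -> act u) -> goodp e phi act -> goodp e phi act'.
Proof.
move=> h [h1 h2]; split; first by move=> u /h; exact: h1.
by move=> u v /h hu /h hv; exact: h2.
Qed.

Lemma goodp_final (R : realType) (T : finType) (e : rel T) (phi : T -> 'rV[R]_3) :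
  goodp e phi predT -> ortho_rep (compl_graph e) phi /\ pairwise_indep phi.
Proof.
move=> [h1 h2]; split; first split.
- by move=> u; exact: h1.
- move=> u v huv; rewrite /compl_graph huv /= negbK; exact: (h2 u v isT isT huv).2.
- move=> u v huv; apply: cross_rowfree; exact: (h2 u v isT isT huv).1.
Qed.

Lemma goodp_base (R : realType) (T : finType) (e : rel T) (P : pred T)
  (phiH : {x : T | P x} -> 'rV[R]_3) :
  ortho_rep (compl_graph (induced_rel e P)) phiH -> pairwise_indep phiH ->
  exists phi : T -> 'rV[R]_3, goodp e phi P.
Proof.
move=> [hnz hort] hind.
exists (fun v => if (insub v : option {x : T | P x}) is Some x then phiH x else 0).
have E : forall u (hu : P u), (if (insub u : option {x : T | P x}) is Some x then phiH x else 0)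
   = phiH (exist _ u hu).
  by move=> u hu; rewrite insubT.
split; first by move=> u hu; rewrite E.
move=> u v hu hv huv; rewrite /pairgood !E.
have hne : exist P u hu != exist P v hv by apply: contra huv => /eqP [] ->.
split; first exact: rowfree_cross (hind _ _ hne).
by rewrite hort // /compl_graph hne /= negbK.
Qed.

Unset Implicit Arguments.

Theorem proposition4p4 (R : realType) (T : finType) (e : rel T)
  (e_sym : symmetric e) (e_irr : irreflexive e)
  (G_conn : connected_graph e)
  (p : seq T) (p_ear : is_ear e p) (p5 : (5 <= size p)%N) :
  (exists phiH : {x : T | x \notin internal p} -> 'rV[R]_3,
      ortho_rep (compl_graph (induced_rel e (fun x => x \notin internal p))) phiH /\
      pairwise_indep phiH) ->
  exists phiG : T -> 'rV[R]_3,
      ortho_rep (compl_graph e) phiG /\ pairwise_indep phiG.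
Proof.
move=> [phiH [hrep hind]].
have [x0 _] : exists x0 : T, True.
  destruct p as [|x s]; first by []. by exists x.
case: p_ear => hpn hd2 _.
have hg : gpath e p by case/andP: hd2.
have hu : uniq p by case/andP: hg.
set N := size p in p5.
have hsz : size p = N by [].
have hint : forall j, (j < N)%N -> (nth x0 p j \in internal p) = (0 < j < N.-1)%N.
  by move=> j hj; rewrite (L_int x0) // index_uniq // hsz.
have hidx : forall j, (j < N)%N -> index (nth x0 p j) p = j.
  by move=> j hj; rewrite index_uniq // hsz.
have hinj : forall i j, (i < N)%N -> (j < N)%N -> (nth x0 p i == nth x0 p j) = (i == j).
  by move=> i j hi hj; rewrite nth_uniq // hsz.
have hnb : forall j u, (0 < j < N.-1)%N ->
    e (nth x0 p j) u = (u == nth x0 p j.-1) || (u == nth x0 p j.+1).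
  by move=> j u hj; apply: L_nbr => //; rewrite hsz.
have hpth : forall j, (j.+1 < N)%N -> e (nth x0 p j) (nth x0 p j.+1).
  by move=> j hj; apply: L_path; rewrite // hsz.
have hintI : forall u, u \in internal p -> (0 < index u p < N.-1)%N.
  by move=> u; rewrite (L_int x0) // hsz.
have hpvI : forall u, u \in internal p -> nth x0 p (index u p) = u.
  move=> u hu'; apply: nth_index; rewrite -index_mem hsz.
  by have := hintI u hu'; lia.
clearbody N.
pose act (m : nat) := fun u => (u \notin internal p) || (index u p <= m)%N.
have base : exists phi : T -> 'rV[R]_3, goodp e phi (act 0%N).
  have [phi hphi] := goodp_base hrep hind.
  exists phi; apply: goodp_ext hphi => u; rewrite /act.
  case/orP => // h; apply/negP => /hintI; lia.
have steps : forall m, (m <= N - 4)%N -> exists phi : T -> 'rV[R]_3, goodp e phi (act m).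
  elim=> [_|m IH hm]; first exact: base.
  have [phi hphi] := IH (ltnW hm).
  apply: (ext1 e_sym (act := act m) (v := nth x0 p m.+1) (m := nth x0 p m) (w0 := nth x0 p N.-1) hphi).
  - rewrite /act hint ?hidx; lia.
  - rewrite /act hidx ?leqnn ?orbT //; lia.
  - rewrite /act hint; lia.
  - rewrite hinj; lia.
  - move=> u hua; rewrite hnb /=; last by lia.
    have -> : (u == nth x0 p m.+2) = false.
      apply/eqP => hh; move: hua; rewrite hh /act hint ?hidx; lia.
    by rewrite orbF.
  - move=> u; rewrite /act; case: (boolP (u \in internal p)) => hI //=.
    have E : (u == nth x0 p m.+1) = (index u p == m.+1).
      apply/eqP/eqP => [->|<-]; [rewrite hidx //; lia | by rewrite hpvI].
    rewrite E; have := hintI u hI; lia.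
have [phi hphi] := steps (N - 4)%N (leqnn _).
have [phi' hphi'] : exists phi' : T -> 'rV[R]_3, goodp e phi' predT.
  apply: (ext2 e_sym (act := act (N - 4)%N) (v1 := nth x0 p (N - 3)) (v2 := nth x0 p (N - 2))
            (m := nth x0 p (N - 4)) (bb := nth x0 p N.-1) hphi).
  - rewrite /act hint ?hidx; lia.
  - rewrite /act hint ?hidx; lia.
  - rewrite hinj; lia.
  - rewrite /act hidx ?leqnn ?orbT //; lia.
  - rewrite /act hint; lia.
  - rewrite hinj; lia.
  - rewrite hnb; last by lia.
    rewrite !hinj; lia.
  - have -> : (N - 2 = (N - 3).+1)%N by lia.
    apply: hpth; lia.
  - move=> u hua; rewrite hnb; last by lia.
    have -> : ((N - 3).-1 = N - 4)%N by lia.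
    have -> : (u == nth x0 p (N - 3).+1) = false.
      apply/eqP => hh; move: hua; rewrite hh /act hint ?hidx; lia.
    by rewrite orbF.
  - move=> u hua; rewrite hnb; last by lia.
    have -> : (u == nth x0 p (N - 2).-1) = false.
      apply/eqP => hh; move: hua; rewrite hh /act hint ?hidx; lia.
    have -> : ((N - 2).+1 = N.-1)%N by lia.
    by [].
  - move=> u; rewrite /act; case: (boolP (u \in internal p)) => hI //=.
    have E1 : (u == nth x0 p (N - 3)) = (index u p == N - 3)%N.
      apply/eqP/eqP => [->|<-]; [rewrite hidx //; lia | by rewrite hpvI].
    have E2 : (u == nth x0 p (N - 2)) = (index u p == N - 2)%N.
      apply/eqP/eqP => [->|<-]; [rewrite hidx //; lia | by rewrite hpvI].
    rewrite E1 E2; have := hintI u hI; lia.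
exists phi'; exact: goodp_final.
Qed.
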